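(* Let $I$ be an ideal of a commutative ring $A$ and let $b\in A$ be such that $b^n\in I^n$ for all sufficiently large positive integers $n$. Then $b\in{}^*I$.
   Context: For an ideal $I$ of $A$, an element $b\in A$ is weakly subintegral over $I$ if there exist $q\in\mathbb{N}$ and elements $a_i\in I^i$ ($1\le i\le 2q+1$) such that $b^n+\sum_{i=1}^n\binom{n}{i}a_ib^{n-i}=0$ for all $n$ with $q+1\le n\le 2q+1$. The weak subintegral closure ${}^*I$ of $I$ is the set of elements of $A$ weakly subintegral over $I$. *)

(* Defs.v *)
From mathcomp Require Import all_boot all_algebra.
Set Implicit Arguments. Unset Strict Implicit. Unset Printing Implicit Defensive.
Import GRing.Theory.
Local Open Scope ring_scope.

Definition is_ideal (A : comPzRingType) (I : A -> Prop) : Prop :=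
  [/\ I 0,
      (forall x y, I x -> I y -> I (x + y)) &
      (forall r x, I x -> I (r * x))].

(* x belongs to the ideal power I^n: the ideal generated by all products of
   n elements of I, i.e. x is an A-linear combination of such products.
   (For n = 0 this is the whole ring A.) *)
Definition ideal_pow (A : comPzRingType) (I : A -> Prop) (n : nat) (x : A) : Prop :=
  exists (m : nat) (c : 'I_m -> A) (f : 'I_m -> 'I_n -> A),
    (forall i j, I (f i j)) /\ x = \sum_(i < m) c i * \prod_(j < n) f i j.

Definition weakly_subintegral (A : comPzRingType) (I : A -> Prop) (b : A) : Prop :=
  exists (q : nat) (a : nat -> A),
    (forall i, (1 <= i <= 2 * q + 1)%N -> ideal_pow I i (a i)) /\
    (forall n, (q + 1 <= n <= 2 * q + 1)%N ->
       b ^+ n + \sum_(1 <= i < n.+1) 'C(n, i)%:R * a i * b ^+ (n - i) = 0).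

Definition weak_subintegral_closure (A : comPzRingType) (I : A -> Prop) : A -> Prop :=
  fun b => weakly_subintegral I b.

(* Main.v *)
Require Import Defs.
From mathcomp Require Import all_boot all_algebra.
Local Open Scope ring_scope.
Import GRing.Theory.

Section Aux.
Variable A : comPzRingType.

Definition delta (t : nat -> A) : nat -> A := fun j => t j.+1 - t j.

Lemma iter_shift i (s : nat -> A) j :
  iter i delta (fun k => s k.+1) j = iter i delta s j.+1.
Proof.
elim: i j => [|i IH] j //=.
by rewrite /delta !IH.
Qed.

Lemma newton n (s : nat -> A) :
  \sum_(i < n.+1) 'C(n, i)%:R * iter i delta s 0 = s n.
Proof.
elim: n s => [|n IH] s.
  by rewrite big_ord_recl big_ord0 /= addr0 mul1r.
have := IH (fun k => s k.+1) => /= <-.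
have E : forall i, iter i delta (fun k => s k.+1) 0 =
    iter i delta s 0 + iter i.+1 delta s 0.
  by move=> i; rewrite iter_shift /= /delta addrC subrK.
under [in RHS]eq_bigr do rewrite E mulrDr.
rewrite big_split /=.
rewrite big_ord_recl /= bin0 mul1r.
under eq_bigr do rewrite binS natrD mulrDl.
rewrite big_split /= addrA.
congr (_ + _).
rewrite [in RHS]big_ord_recl /= bin0 mul1r addrC.
rewrite big_ord_recr /= bin_small // mul0r addr0 addrC.
by congr (_ + _); apply: eq_bigr => i _.
Qed.

Lemma delta_const N i j : (i + j < N)%N ->
  iter i delta (fun k => if (k < N)%N then (1 : A) else 0) j = (i == 0)%:R.
Proof.
elim: i j => [|i IH] j H /=.
  by rewrite H.
rewrite /delta !IH ?subrr //; first by apply: ltnW; rewrite -addSn.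
by rewrite addnS -addSn.
Qed.

Lemma ideal_pow_mul (I : A -> Prop) n r x :
  ideal_pow I n x -> ideal_pow I n (r * x).
Proof.
move=> [m [c [f [Hf ->]]]].
exists m, (fun i => r * c i), f; split => //.
by rewrite mulr_sumr; apply: eq_bigr => i _; rewrite mulrA.
Qed.

Lemma ideal_pow0 (I : A -> Prop) n : ideal_pow I n 0.
Proof.
exists 0%N, (fun _ => 0), (fun _ _ => 0); split.
  by move=> [].
by rewrite big_ord0.
Qed.
End Aux.

Theorem mainTheorem10 (A : comPzRingType) (I : A -> Prop) (b : A) :
  is_ideal I ->
  (exists N : nat, forall n : nat, (N <= n)%N -> (0 < n)%N -> ideal_pow I n (b ^+ n)) ->
  weak_subintegral_closure I b.
Proof.
move=> _ [N0 HN0].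
pose N := N0.+1.
have HN : forall n, (N <= n)%N -> (0 < n)%N -> ideal_pow I n (b ^+ n).
  by move=> n Hn; apply: HN0; apply: ltnW.
pose s := fun k : nat => if (k < N)%N then (1 : A) else 0.
pose D := fun i => iter i (@delta A) s 0.
exists N, (fun i => if (i < N)%N then 0 else D i * b ^+ i); split.
  move=> i /andP [Hi _].
  case: ifP => H; first exact: ideal_pow0.
  by apply: ideal_pow_mul; apply: HN => //; rewrite leqNgt H.
move=> n /andP [Hn _].
have Hs : s n = 0 by rewrite /s ltnNge (leq_trans (leqnSn N)) //; rewrite -addn1.
have T : forall i : 'I_n, 'C(n, i.+1)%:R * (if (i.+1 < N)%N then 0 else D i.+1 * b ^+ i.+1) * b ^+ (n - i.+1)
   = 'C(n, i.+1)%:R * D i.+1 * b ^+ n.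
  move=> i; case: ifP => H.
    rewrite /D delta_const ?addn0 //= mulr0 !mul0r; done.
  by rewrite -!mulrA -exprD subnKC // ltn_ord.
rewrite big_add1 /= big_mkord.
under eq_bigr do rewrite T.
have := @newton A n s; rewrite big_ord_recl /= bin0 mul1r Hs => E.
rewrite -mulr_suml -{1}(mul1r (b ^+ n)) -mulrDl.
have s0 : s 0 = 1 by [].
rewrite s0 in E.
rewrite -[in RHS](mul0r (b ^+ n)) -[in RHS]E.
by congr (_ * _); congr (_ + _); apply: eq_bigr.
Qed.
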